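(* Let $\alpha:\mathbb{R}\rightarrow\mathbb{R}$ be a $C^2$ function all of whose zeros are simple, i.e. on the set $\mathcal{X}:=\{x\in\mathbb{R} \mid \alpha(x)=0\}$ one has $\alpha'(x)\neq 0$. Define $f:\mathbb{R}^2\rightarrow\mathbb{R}$ by \[ f(x,y) := \left(\alpha(x) - \left[\alpha(x)-\alpha'(x)\right]^2 y\right)^2 - A(x), \] where $A$ is any antiderivative of $x\mapsto \alpha(x)\left[\alpha(x)-\alpha'(x)\right]$. Let $\mathcal{C}(f):=\{(x,y)\mid f_x(x,y)=f_y(x,y)=0\}$ be the set of critical points of $f$. Then: (1) $\mathcal{C}(f) = \mathcal{X}\times\{0\}$; (2) at each point of $\mathcal{C}(f)$ the Hessian of $f$ is positive definite. Consequently, $f$ has local minima at the points of $\mathcal{X}\times\{0\}$ and no other critical points. *)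

(* Defs.v *)
From Stdlib Require Import Reals.
From Coquelicot Require Import Coquelicot.
Open Scope R_scope.

Definition C2 (a : R -> R) : Prop :=
  forall x, ex_derive a x /\ ex_derive (Derive a) x /\ continuous (Derive (Derive a)) x.

Definition fdef (a A : R -> R) (x y : R) : R :=
  (a x - (a x - Derive a x) ^ 2 * y) ^ 2 - A x.

Definition critical (F : R -> R -> R) (x y : R) : Prop :=
  is_derive (fun t => F t y) x 0 /\ is_derive (fun t => F x t) y 0.

Definition fx (F : R -> R -> R) (x y : R) : R := Derive (fun t => F t y) x.
Definition fy (F : R -> R -> R) (x y : R) : R := Derive (fun t => F x t) y.

Definition hxx F x y := Derive (fun t => fx F t y) x.
Definition hxy F x y := Derive (fun t => fx F x t) y.
Definition hyx F x y := Derive (fun t => fy F t y) x.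
Definition hyy F x y := Derive (fun t => fy F x t) y.

Definition hessian_pos_def (F : R -> R -> R) (x y : R) : Prop :=
  ex_derive (fun t => fx F t y) x /\ ex_derive (fun t => fx F x t) y /\
  ex_derive (fun t => fy F t y) x /\ ex_derive (fun t => fy F x t) y /\
  forall u w : R, (u <> 0 \/ w <> 0) ->
    0 < u * (hxx F x y * u + hyx F x y * w) + w * (hxy F x y * u + hyy F x y * w).

Definition local_min (F : R -> R -> R) (x y : R) : Prop :=
  exists eps : R, 0 < eps /\
    forall u w : R, sqrt ((u - x) ^ 2 + (w - y) ^ 2) < eps -> F x y <= F u w.

(* Main.v *)
Require Import Defs.
From Stdlib Require Import Reals Lra Psatz.
From Coquelicot Require Import Coquelicot.
Open Scope R_scope.
Section S.
Variable a A : R -> R.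
Hypothesis Ha : C2 a.
Hypothesis HA : forall x, is_derive A x (a x * (a x - Derive a x)).
Notation D1 := (Derive a).
Notation D2 := (Derive (Derive a)).
Definition FX x y := 2*(a x - (a x - D1 x)^2*y)*(D1 x - 2*(a x - D1 x)*(D1 x - D2 x)*y) - a x*(a x - D1 x).
Definition FY x y := 2*(a x - (a x - D1 x)^2*y)*(-(a x - D1 x)^2).
Lemma Lx x y : is_derive (fun t => fdef a A t y) x (FX x y).
Proof.
  destruct (Ha x) as [h1 [h2 _]].
  assert (H1: is_derive (fun t => (a t - (a t - Derive a t)^2*y)^2) x
    (2*(a x - (a x - D1 x)^2*y)*(D1 x - 2*(a x - D1 x)*(D1 x - D2 x)*y))).
  { auto_derive. split; auto. change (Derive (fun x0 : R => a x0) x) with (D1 x); change (Derive (fun x0 => D1 x0) x) with (D2 x). ring. }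
  exact (is_derive_minus _ _ _ _ _ H1 (HA x)).
Qed.
Lemma Ly x y : is_derive (fun t => fdef a A x t) y (FY x y).
Proof. unfold fdef, FY. auto_derive. easy. ring. Qed.
Notation F := (fdef a A).
Lemma fxE x y : fx F x y = FX x y.
Proof. exact (is_derive_unique _ _ _ (Lx x y)). Qed.
Lemma fyE x y : fy F x y = FY x y.
Proof. exact (is_derive_unique _ _ _ (Ly x y)). Qed.
Let cd x : ex_derive a x /\ ex_derive D1 x.
Proof. destruct (Ha x) as [h1 [h2 _]]; auto. Qed.
Ltac fixd x := change (Derive (fun x0 : R => a x0) x) with (D1 x) in *;
   change (Derive (fun x0 => D1 x0) x) with (D2 x) in *.
Lemma Hxx x : is_derive (fun t => fx F t 0) x
   (3*(D1 x ^2 + a x * D2 x) - 2 * a x * D1 x).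
Proof.
  destruct (cd x) as [h1 h2].
  assert (E: forall t:R, 3 * a t * D1 t - a t ^ 2 = fx F t 0) by (intro t; rewrite fxE; unfold FX; ring).
  apply (is_derive_ext _ _ _ _ E).
  auto_derive. split; auto. fixd x. ring.
Qed.
Lemma Hyx x : is_derive (fun t => fy F t 0) x
   (-2 * D1 x * (a x - D1 x)^2 - 4 * a x * (a x - D1 x)*(D1 x - D2 x)).
Proof.
  destruct (cd x) as [h1 h2].
  assert (E: forall t:R, -2 * a t * (a t - D1 t)^2 = fy F t 0) by (intro t; rewrite fyE; unfold FY; ring).
  apply (is_derive_ext _ _ _ _ E).
  auto_derive. split; auto. fixd x. ring.
Qed.
Lemma Hxy x : is_derive (fun t => fx F x t) 0
   (-2 * (a x - D1 x)^2 * D1 x - 4 * a x * (a x - D1 x)*(D1 x - D2 x)).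
Proof.
  assert (E: forall t:R, FX x t = fx F x t) by (intro t; rewrite fxE; auto).
  apply (is_derive_ext _ _ _ _ E).
  unfold FX. auto_derive. easy. ring.
Qed.
Lemma Hyy x : is_derive (fun t => fy F x t) 0 (2 * (a x - D1 x)^4).
Proof.
  assert (E: forall t:R, FY x t = fy F x t) by (intro t; rewrite fyE; auto).
  apply (is_derive_ext _ _ _ _ E).
  unfold FY. auto_derive. easy. ring.
Qed.
Hypothesis Hsimple : forall x, a x = 0 -> D1 x <> 0.
Lemma crit x y : critical F x y <-> (a x = 0 /\ y = 0).
Proof.
  split.
  - intros [H1 H2].
    assert (E1 : FX x y = 0) by (rewrite <- fxE; exact (is_derive_unique _ _ _ H1)).
    assert (E2 : FY x y = 0) by (rewrite <- fyE; exact (is_derive_unique _ _ _ H2)).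
    unfold FX, FY in *.
    set (u := a x) in *; set (b := D1 x) in *; set (e := D2 x) in *.
    assert (Hs := Hsimple x); fold u b in Hs.
    destruct (Req_dec (u - b) 0) as [Hd|Hd].
    + assert (Hub : b = u) by lra. rewrite Hub in Hs.
      assert (Hu : u * u = 0) by (rewrite Hd in E1; nra).
      assert (Hu0 : u = 0) by nra. exfalso; exact (Hs Hu0 Hu0).
    + assert (Hg : (u - b)^2 <> 0) by (apply pow_nonzero; auto).
      assert (Hz : u - (u - b)^2 * y = 0).
      { apply Rmult_integral in E2. destruct E2 as [E2|E2].
        - apply Rmult_integral in E2. destruct E2 as [E2|E2]; [lra|auto].
        - exfalso; apply Hg; lra. }
      rewrite Hz in E1.
      assert (Hud : u * (u - b) = 0) by lra.
      apply Rmult_integral in Hud. destruct Hud as [Hu|Hu]; [|contradiction].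
      split; auto.
      assert (Hy : (u - b)^2 * y = 0) by lra.
      apply Rmult_integral in Hy. destruct Hy; [contradiction|auto].
  - intros [Hx Hy]. subst y. split.
    + pose proof (Lx x 0) as L. replace (FX x 0) with 0 in L by (unfold FX; rewrite Hx; ring). exact L.
    + pose proof (Ly x 0) as L. replace (FY x 0) with 0 in L by (unfold FY; rewrite Hx; ring). exact L.
Qed.
Lemma hess x : a x = 0 -> hessian_pos_def F x 0.
Proof.
  intro Hx.
  assert (Hc := Hsimple x Hx).
  assert (E1 : hxx F x 0 = 3*(D1 x ^2 + a x * D2 x) - 2 * a x * D1 x) by exact (is_derive_unique _ _ _ (Hxx x)).
  assert (E2 : hxy F x 0 = -2 * (a x - D1 x)^2 * D1 x - 4 * a x * (a x - D1 x)*(D1 x - D2 x)) by exact (is_derive_unique _ _ _ (Hxy x)).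
  assert (E3 : hyx F x 0 = -2 * D1 x * (a x - D1 x)^2 - 4 * a x * (a x - D1 x)*(D1 x - D2 x)) by exact (is_derive_unique _ _ _ (Hyx x)).
  assert (E4 : hyy F x 0 = 2 * (a x - D1 x)^4) by exact (is_derive_unique _ _ _ (Hyy x)).
  unfold hessian_pos_def. rewrite E1, E2, E3, E4.
  split; [exact (ex_intro _ _ (Hxx x))|]. split; [exact (ex_intro _ _ (Hxy x))|].
  split; [exact (ex_intro _ _ (Hyx x))|]. split; [exact (ex_intro _ _ (Hyy x))|].
  intros u w Huw. rewrite Hx. set (c := D1 x) in *.
  replace (u * ((3 * (c ^ 2 + 0 * D2 x) - 2 * 0 * c) * u + (-2 * c * (0 - c) ^ 2 - 4 * 0 * (0 - c) * (c - D2 x)) * w) +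
   w * ((-2 * (0 - c) ^ 2 * c - 4 * 0 * (0 - c) * (c - D2 x)) * u + 2 * (0 - c) ^ 4 * w))
   with (c^2 * (2 * (u - c*w)^2 + u^2)) by ring.
  apply Rmult_lt_0_compat. { apply pow2_gt_0. auto. }
  destruct (Req_dec u 0) as [Hu|Hu].
  - subst u. destruct Huw as [|Hw]; [lra|].
    assert (0 < (c*w)^2) by (apply pow2_gt_0; apply Rmult_integral_contrapositive; auto).
    replace ((0 - c*w)^2) with ((c*w)^2) by ring. lra.
  - assert (0 < u^2) by (apply pow2_gt_0; auto). assert (0 <= (u-c*w)^2) by apply pow2_ge_0. lra.
Qed.
Lemma locmin x : a x = 0 -> local_min F x 0.
Proof.
  intro Hx. assert (Hc := Hsimple x Hx).
  set (h := fun t => a t * (a t - D1 t)).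
  assert (Hh : is_derive h x (-(D1 x)^2)).
  { destruct (cd x) as [h1 h2]. unfold h. auto_derive. split; auto.
    fixd x. rewrite Hx. ring. }
  apply is_derive_Reals in Hh.
  assert (Hc2 : 0 < D1 x ^ 2) by (apply pow2_gt_0; auto).
  destruct (Hh (D1 x ^2 / 2)) as [delta Hd]; [lra|].
  assert (hx0 : h x = 0) by (unfold h; rewrite Hx; ring).
  assert (K : forall t, Rabs (t - x) < delta -> t <> x -> h t * (t - x) <= 0).
  { intros t Ht Htx.
    assert (Hk : t - x <> 0) by lra.
    specialize (Hd (t - x) Hk Ht).
    replace (x + (t - x)) with t in Hd by ring. rewrite hx0 in Hd.
    apply Rabs_def2 in Hd. destruct Hd as [Hd1 Hd2].
    assert (Hq : h t / (t - x) < 0) by lra.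
    replace (h t * (t - x)) with ((h t / (t - x)) * ((t - x) * (t - x))) by (field; auto).
    assert (0 <= (t - x) * (t - x)) by nra. nra. }
  exists delta. split; [apply cond_pos|].
  intros u w Huw.
  assert (Hux : Rabs (u - x) < delta).
  { rewrite <- sqrt_Rsqr_abs. unfold Rsqr. eapply Rle_lt_trans; [|exact Huw].
    apply sqrt_le_1_alt. assert (0 <= (w - 0)^2) by apply pow2_ge_0. simpl. nra. }
  assert (HAu : A u <= A x).
  { destruct (MVT_gen A x u h) as [c0 [Hc0 Hm]].
    - intros t _. apply HA.
    - intros t _. apply continuity_pt_filterlim. apply (@ex_derive_continuous R_AbsRing R_NormedModule A t).
      exists (h t). apply HA.
    - assert (Hc0x : Rabs (c0 - x) <= Rabs (u - x)).
      { unfold Rmin, Rmax in Hc0. destruct (Rle_dec x u);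
        unfold Rabs; destruct (Rcase_abs (c0 - x)); destruct (Rcase_abs (u - x)); lra. }
      destruct (Req_dec c0 x) as [E|E].
      + rewrite E, hx0 in Hm. lra.
      + assert (Kc := K c0 ltac:(lra) E).
        unfold Rmin, Rmax in Hc0. destruct (Rle_dec x u).
        * assert (h c0 <= 0) by (destruct (Rle_lt_dec (h c0) 0); [auto| nra]). nra.
        * assert (0 <= h c0) by (destruct (Rle_lt_dec 0 (h c0)); [auto| nra]). nra. }
  unfold fdef. rewrite Hx.
  assert (0 <= (a u - (a u - D1 u) ^ 2 * w) ^ 2) by apply pow2_ge_0.
  replace ((0 - (0 - D1 x) ^ 2 * 0) ^ 2) with 0 by ring. lra.
Qed.
End S.
Theorem lemma1 (alpha A : R -> R)
  (Halpha : C2 alpha)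
  (Hsimple : forall x, alpha x = 0 -> Derive alpha x <> 0)
  (HA : forall x, is_derive A x (alpha x * (alpha x - Derive alpha x))) :
  (forall x y, critical (fdef alpha A) x y <-> (alpha x = 0 /\ y = 0)) /\
  (forall x, alpha x = 0 -> hessian_pos_def (fdef alpha A) x 0) /\
  (forall x, alpha x = 0 -> local_min (fdef alpha A) x 0).
Proof.
  split; [|split].
  - intros x y. exact (crit alpha A Halpha HA Hsimple x y).
  - intros x. exact (hess alpha A Halpha HA Hsimple x).
  - intros x. exact (locmin alpha A Halpha HA Hsimple x).
Qed.
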